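(* Let $A\in\mathbb{R}^{m\times n}$, $b\in\mathbb{R}^m$, $f(x)=\frac12\|Ax-b\|^2$, and let $x^k,x^{k-1}\in\mathbb{R}^n$ with $\nabla f(x^k)\neq 0$ and $x^k\neq x^{k-1}$. Let $g=\nabla f(x^k)/\|\nabla f(x^k)\|$, $d=(x^k-x^{k-1})/\|x^k-x^{k-1}\|$, $\epsilon=g^td$, and assume $\epsilon^2<1$. Let $S_{11}=g^tA^tAg$, $S_{12}=g^tA^tAd$, $S_{22}=d^tA^tAd$, $\eta_1=1-\epsilon^2$, $\eta_2=-S_{11}-S_{22}+2\epsilon S_{12}$, $\eta_3=S_{11}S_{22}-S_{12}^2$, and $$\sigma=\frac{-\eta_2+\sqrt{\eta_2^2-4\eta_1\eta_3}}{2\eta_1}.$$ Then $\sigma\ge S_{11}$ and $\sigma\ge S_{22}$; consequently the linear system $$\begin{pmatrix}1&\epsilon\\ \epsilon&1\end{pmatrix}\begin{pmatrix}\tau\\ \rho\end{pmatrix}=\begin{pmatrix}\sqrt{\sigma-S_{11}}\\ \sqrt{\sigma-S_{22}}\,\mathrm{sgn}(\epsilon\sigma-S_{12})\end{pmatrix}$$ has a real solution $(\tau,\rho)$, so that $u=\tau g+\rho d$ exists.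
   Context: $\|\cdot\|$ denotes the Euclidean norm; $\mathrm{sgn}$ is the sign function. The discriminant $\eta_2^2-4\eta_1\eta_3$ is nonnegative under these assumptions, so $\sigma$ is a real number (the larger root of $\eta_1\sigma^2+\eta_2\sigma+\eta_3=0$). *)

(* Defs.v *)
From HB Require Import structures.
From mathcomp Require Import all_boot all_order all_algebra.
From mathcomp Require Import reals.
Set Implicit Arguments. Unset Strict Implicit. Unset Printing Implicit Defensive.
Import Order.TTheory GRing.Theory Num.Theory.
Local Open Scope ring_scope.

Definition dotv (R : realType) (n : nat) (u v : 'cV[R]_n) : R :=
  \sum_(i < n) u i 0 * v i 0.

Definition enorm (R : realType) (n : nat) (v : 'cV[R]_n) : R :=
  Num.sqrt (dotv v v).

Definition lsq (R : realType) (m n : nat) (A : 'M[R]_(m, n)) (b : 'cV[R]_m)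
  (x : 'cV[R]_n) : R := (enorm (A *m x - b)) ^+ 2 / 2.

Definition lsq_grad (R : realType) (m n : nat) (A : 'M[R]_(m, n))
  (b : 'cV[R]_m) (x : 'cV[R]_n) : 'cV[R]_n := A^T *m (A *m x - b).

(* Main.v *)
Require Import Defs.
From HB Require Import structures.
From mathcomp Require Import all_boot all_order all_algebra.
From mathcomp Require Import reals.
From mathcomp Require Import ring lra.
Import Order.TTheory GRing.Theory Num.Theory.
Local Open Scope ring_scope.

Lemma root_ge (R : realType) (e S11 S12 S22 x : R) :
  e ^+ 2 < 1 ->
  (x = S11 \/ x = S22) ->
  x <= (- (- S11 - S22 + 2 * e * S12) +
        Num.sqrt ((- S11 - S22 + 2 * e * S12) ^+ 2 -
                  4 * (1 - e ^+ 2) * (S11 * S22 - S12 ^+ 2))) / (2 * (1 - e ^+ 2)).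
Proof.
move=> he hx.
set e1 := 1 - e ^+ 2.
set e2 := - S11 - S22 + 2 * e * S12.
set D := e2 ^+ 2 - 4 * e1 * (S11 * S22 - S12 ^+ 2).
have pe1 : 0 < e1 by rewrite /e1 subr_gt0.
have hD : D = (2 * e1 * x + e2) ^+ 2 + 4 * e1 * (e * x - S12) ^+ 2.
  by rewrite /D /e1 /e2; case: hx => ->; ring.
have D0 : 0 <= D by rewrite hD; apply: addr_ge0; [exact: sqr_ge0|
  apply: mulr_ge0; [apply: mulr_ge0; lra | exact: sqr_ge0]].
have s0 : 0 <= Num.sqrt D by exact: sqrtr_ge0.
have s2 : Num.sqrt D ^+ 2 = D by rewrite sqr_sqrtr.
have q0 : 0 <= 4 * e1 * (e * x - S12) ^+ 2.
  by apply: mulr_ge0; [apply: mulr_ge0; lra | exact: sqr_ge0].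
have st : 2 * e1 * x + e2 <= Num.sqrt D.
  set t := 2 * e1 * x + e2. set s := Num.sqrt D.
  have : t ^+ 2 <= s ^+ 2.
    by rewrite s2 hD -/t lerDl.
  move=> h; rewrite leNgt; apply/negP => lt.
  have t0 : 0 < t := le_lt_trans s0 lt.
  have : 0 < (t - s) * (t + s).
    by apply: mulr_gt0; [rewrite subr_gt0 | apply: (lt_le_trans t0); rewrite lerDl].
  have -> : (t - s) * (t + s) = t ^+ 2 - s ^+ 2 by ring.
  by rewrite subr_gt0 ltNge h.
have e10 : 0 < 2 * e1 by rewrite mulr_gt0.
rewrite ler_pdivlMr //.
have -> : x * (2 * e1) = (2 * e1 * x + e2) - e2 by ring.
by rewrite addrC lerD2l.
Qed.

Lemma main_alg (R : realType) (eps S11 S12 S22 : R) :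
  eps ^+ 2 < 1 ->
  let eta1 := 1 - eps ^+ 2 in
  let eta2 := - S11 - S22 + 2 * eps * S12 in
  let eta3 := S11 * S22 - S12 ^+ 2 in
  let sigma := (- eta2 + Num.sqrt (eta2 ^+ 2 - 4 * eta1 * eta3)) / (2 * eta1) in
  S11 <= sigma /\ S22 <= sigma /\
  exists tau rho : R,
    tau + eps * rho = Num.sqrt (sigma - S11) /\
    eps * tau + rho = Num.sqrt (sigma - S22) * Num.sg (eps * sigma - S12).
Proof.
move=> he eta1 eta2 eta3 sigma.
split; first by apply: root_ge => //; left.
split; first by apply: root_ge => //; right.
move: (Num.sqrt (sigma - S11)) (Num.sqrt (sigma - S22) * Num.sg (eps * sigma - S12)) => a c.
have pe : 1 - eps ^+ 2 != 0 by rewrite subr_eq0 eq_sym; apply/negP => /eqP h; lra.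
exists ((a - eps * c) / (1 - eps ^+ 2)), ((c - eps * a) / (1 - eps ^+ 2)).
by split; field.
Qed.

Theorem claim2 (R : realType) (m n : nat) (A : 'M[R]_(m, n)) (b : 'cV[R]_m)
  (xk xk1 : 'cV[R]_n) :
  lsq_grad A b xk != 0 ->
  xk != xk1 ->
  let g := (enorm (lsq_grad A b xk))^-1 *: lsq_grad A b xk in
  let d := (enorm (xk - xk1))^-1 *: (xk - xk1) in
  let eps := dotv g d in
  eps ^+ 2 < 1 ->
  let S11 := dotv (A *m g) (A *m g) in
  let S12 := dotv (A *m g) (A *m d) in
  let S22 := dotv (A *m d) (A *m d) in
  let eta1 := 1 - eps ^+ 2 in
  let eta2 := - S11 - S22 + 2 * eps * S12 in
  let eta3 := S11 * S22 - S12 ^+ 2 in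
  let sigma := (- eta2 + Num.sqrt (eta2 ^+ 2 - 4 * eta1 * eta3)) / (2 * eta1) in
  S11 <= sigma /\ S22 <= sigma /\
  exists tau rho : R,
    tau + eps * rho = Num.sqrt (sigma - S11) /\
    eps * tau + rho = Num.sqrt (sigma - S22) * Num.sg (eps * sigma - S12).
Proof.
move=> _ _ g d eps he S11 S12 S22; clearbody S11 S12 S22 eps.
exact: (@main_alg R eps S11 S12 S22 he).
Qed.
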